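(* Let $F:\mathbb R^n\to\mathbb R^n$ be monotone with $\|F(z)-F(z')\|\le\ell\|z-z'\|$ and $\|\partial F(z)-\partial F(z')\|_\sigma\le\Lambda\|z-z'\|$. Let $\eta>0$, $z^{(-1)},z^{(0)}\in\mathbb R^n$, $z^{(t+1)}=z^{(t)}-2\eta F(z^{(t)})+\eta F(z^{(t-1)})$, $w^{(t)}:=z^{(t)}+\eta F(z^{(t-1)})$, $A^{(t)}:=\int_0^1\partial F(w^{(t)}-(1-\alpha)\eta F(z^{(t)}))d\alpha$, $B^{(t)}:=\int_0^1\partial F(w^{(t)}-(1-\alpha)\eta F(z^{(t-1)}))d\alpha$. Fix an integer $T\ge1$, set $C^{(T)}:=0$ and recursively, for $t=T,T-1,\dots,0$, $C^{(t-1)}:=(I-\eta A^{(t)}+C^{(t)})^{-1}\,\eta(\eta A^{(t)}-C^{(t)})B^{(t)}$. Let $\delta^{(t)}:=\max\{\|F(z^{(t)})\|,\|F(z^{(t-1)})\|\}$. Suppose there is $L_0>0$ such that for all $0\le t\le T$, $\max\{\eta\|A^{(t)}\|_\sigma,\eta\|B^{(t)}\|_\sigma\}\le L_0\le\sqrt{1/200}$, and $\eta\ell\le2/3$. Then: 1. $\|C^{(t)}\|_\sigma\le 2L_0^2$ for each $t\in\{1,\dots,T\}$. 2. The matrices $C^{(t)}$ are well defined, i.e. $I-\eta A^{(t)}+C^{(t)}$ is invertible for each $t\in\{1,\dots,T\}$, and its inverse has spectral norm at most $\sqrt2$. 3. $\|\eta A^{(t)}-C^{(t)}\|_\sigma\le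 2L_0$ and $\|I-\eta A^{(t)}+C^{(t)}\|_\sigma\le1+2L_0$ for each $t\in\{1,\dots,T\}$. 4. For all $t<T$, $(I-\eta A^{(t+1)}+C^{(t+1)})^{-1}(\eta A^{(t+1)}-C^{(t+1)})(\eta A^{(t+1)}-C^{(t+1)})^\top(I-\eta A^{(t+1)}+C^{(t+1)})^{-\top}\preceq 3\big((\eta A^{(t+1)})(\eta A^{(t+1)})^\top+C^{(t+1)}(C^{(t+1)})^\top\big)$. 5. For all $t<T$, $C^{(t)}(C^{(t)})^\top\preceq J_1\,(\eta A^{(t)})(\eta A^{(t)})^\top+J_2(\delta^{(t)})^2 I$, where $J_1=8L_0^2$ and $J_2=30L_0^2\eta^2(\eta\Lambda)^2$.
   Context: $F$ monotone means $\langle F(z')-F(z),z'-z\rangle\ge0$ for all $z,z'$. $\partial F$ is the Jacobian; $\|\cdot\|_\sigma$ the spectral norm; $M^{-\top}:=(M^{-1})^\top$; $S\preceq T$ means $T-S$ is positive semidefinite. *)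

(* Defs.v *)
From HB Require Import structures.
From mathcomp Require Import all_boot all_order all_algebra.
From mathcomp Require Import all_classical all_reals all_analysis.
Set Implicit Arguments. Unset Strict Implicit. Unset Printing Implicit Defensive.
Import Order.TTheory GRing.Theory Num.Theory.
Import numFieldNormedType.Exports.
Local Open Scope classical_set_scope.
Local Open Scope ring_scope.

(* Vectors of R^n are represented as row vectors 'rV[R]_n (this is the
   convention of MathComp-Analysis's [jacobian]).  Matrices 'M[R]_n act in
   the usual way on column vectors. *)

Definition enorm (R : realType) (m k : nat) (M : 'M[R]_(m, k)) : R :=
  Num.sqrt (\sum_(i < m) \sum_(j < k) M i j ^+ 2).

Definition specnorm (R : realType) (n : nat) (M : 'M[R]_n) : R :=
  sup [set enorm (M *m x) | x in [set x : 'cV[R]_n | enorm x <= 1]].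

Definition psd (R : realType) (n : nat) (M : 'M[R]_n) : Prop :=
  forall x : 'cV[R]_n, 0 <= (x^T *m M *m x) 0 0.
Definition loewner_le (R : realType) (n : nat) (S T : 'M[R]_n) : Prop :=
  psd (T - S).

Definition monotone_op (R : realType) (n : nat) (F : 'rV[R]_n -> 'rV[R]_n) :=
  forall z z' : 'rV[R]_n, 0 <= \sum_(i < n) (F z' - F z) 0 i * (z' - z) 0 i.

(* The Jacobian matrix dF(z) in the standard convention (entry (i,j) is
   d F_i / d z_j); the library's [jacobian] is its transpose. *)
Definition Jac (R : realType) (n : nat) (F : 'rV[R]_n -> 'rV[R]_n) (z : 'rV[R]_n)
  : 'M[R]_n := (jacobian F z)^T.

Definition mxint01 (R : realType) (n : nat) (M : R -> 'M[R]_n) : 'M[R]_n :=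
  \matrix_(i, j) Rintegral (@lebesgue_measure R) `[0%R, 1%R]%classic
                           (fun a => M a i j).

(* Optimistic gradient iterates: zs k = z^(k-1), i.e. zs 0 = z^(-1),
   zs 1 = z^(0), and z^(t+1) = z^(t) - 2 eta F(z^(t)) + eta F(z^(t-1)). *)
Fixpoint ogda_aux (R : realType) (n : nat) (F : 'rV[R]_n -> 'rV[R]_n) (eta : R)
  (zm1 z0 : 'rV[R]_n) (k : nat) : 'rV[R]_n * 'rV[R]_n :=
  match k with
  | 0 => (zm1, z0)
  | k'.+1 => let p := ogda_aux F eta zm1 z0 k' in
             (p.2, p.2 - (2 * eta) *: F p.2 + eta *: F p.1)
  end.
Definition zs (R : realType) (n : nat) (F : 'rV[R]_n -> 'rV[R]_n) (eta : R)
  (zm1 z0 : 'rV[R]_n) (k : nat) : 'rV[R]_n := (ogda_aux F eta zm1 z0 k).1.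

Section Iterates.
Variables (R : realType) (n : nat) (F : 'rV[R]_n -> 'rV[R]_n) (eta : R)
  (zm1 z0 : 'rV[R]_n).

Definition zt (t : nat) := zs F eta zm1 z0 t.+1.
Definition ztm1 (t : nat) := zs F eta zm1 z0 t.

Definition wt (t : nat) := zt t + eta *: F (ztm1 t).

Definition At (t : nat) : 'M[R]_n :=
  mxint01 (fun a => Jac F (wt t - ((1 - a) * eta) *: F (zt t))).
Definition Bt (t : nat) : 'M[R]_n :=
  mxint01 (fun a => Jac F (wt t - ((1 - a) * eta) *: F (ztm1 t))).

(* Caux T k = C^(T-k): C^(T) = 0 and
   C^(t-1) = (I - eta A^(t) + C^(t))^-1 eta (eta A^(t) - C^(t)) B^(t). *)
Fixpoint Caux (T k : nat) : 'M[R]_n :=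
  match k with
  | 0 => 0
  | k'.+1 => let t := (T - k')%N in
             invmx (1%:M - eta *: At t + Caux T k')
               *m (eta *: (eta *: At t - Caux T k')) *m Bt t
  end.
Definition Ct (T t : nat) : 'M[R]_n := Caux T (T - t).

Definition deltat (t : nat) : R := Num.max (enorm (F (zt t))) (enorm (F (ztm1 t))).
End Iterates.

(* Main.v *)
Require Import Defs.
From HB Require Import structures.
From mathcomp Require Import all_boot all_order all_algebra.
From mathcomp Require Import all_classical all_reals all_analysis.
From mathcomp Require Import ring lra.
Import Order.TTheory GRing.Theory Num.Theory.
Import numFieldNormedType.Exports.
Local Open Scope ring_scope.

Module P1.
Set Implicit Arguments. Unset Strict Implicit. Unset Printing Implicit Defensive.

Section Norms.
Variable R : realType.

Definition dotm m k (X Y : 'M[R]_(m,k)) : R := \sum_i \sum_j X i j * Y i j.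

Lemma dotmE m k (X : 'M[R]_(m,k)) : dotm X X = \sum_i \sum_j X i j ^+ 2.
Proof. by apply: eq_bigr => i _; apply: eq_bigr => j _; rewrite expr2. Qed.

Lemma enorm_ge0 m k (X : 'M[R]_(m,k)) : 0 <= enorm X.
Proof. exact: sqrtr_ge0. Qed.

Lemma enorm_sqr m k (X : 'M[R]_(m,k)) : enorm X ^+ 2 = dotm X X.
Proof.
rewrite dotmE /enorm sqr_sqrtr //.
by apply: sumr_ge0 => i _; apply: sumr_ge0 => j _; apply: sqr_ge0.
Qed.

Lemma dotmC m k (X Y : 'M[R]_(m,k)) : dotm X Y = dotm Y X.
Proof. by apply: eq_bigr => i _; apply: eq_bigr => j _; rewrite mulrC. Qed.

Lemma dotmDl m k (X Y Z : 'M[R]_(m,k)) : dotm (X + Y) Z = dotm X Z + dotm Y Z.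
Proof.
rewrite /dotm -big_split; apply: eq_bigr => i _; rewrite -big_split.
by apply: eq_bigr => j _; rewrite mxE mulrDl.
Qed.

Lemma dotmZl m k c (X Y : 'M[R]_(m,k)) : dotm (c *: X) Y = c * dotm X Y.
Proof.
rewrite /dotm mulr_sumr; apply: eq_bigr => i _; rewrite mulr_sumr.
by apply: eq_bigr => j _; rewrite mxE mulrA.
Qed.

Lemma dotmNl m k (X Y : 'M[R]_(m,k)) : dotm (- X) Y = - dotm X Y.
Proof. by rewrite -scaleN1r dotmZl mulN1r. Qed.

Lemma dotmBl m k (X Y Z : 'M[R]_(m,k)) : dotm (X - Y) Z = dotm X Z - dotm Y Z.
Proof. by rewrite dotmDl dotmNl. Qed.

Lemma dotmBr m k (X Y Z : 'M[R]_(m,k)) : dotm Z (X - Y) = dotm Z X - dotm Z Y.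
Proof. by rewrite dotmC dotmBl !(dotmC Z). Qed.

Lemma dotmZr m k c (X Y : 'M[R]_(m,k)) : dotm Y (c *: X) = c * dotm Y X.
Proof. by rewrite dotmC dotmZl dotmC. Qed.

Lemma enorm_eq0 m k (X : 'M[R]_(m,k)) : enorm X = 0 -> X = 0.
Proof.
move=> h; have h2 : dotm X X = 0 by rewrite -enorm_sqr h expr0n.
rewrite dotmE in h2.
apply/matrixP => i j; rewrite mxE.
have hi := psumr_eq0P (fun i _ => sumr_ge0 _ (fun j _ => sqr_ge0 (X i j))) h2 (isT : true).
have hij := psumr_eq0P (fun j _ => sqr_ge0 (X i j)) (hi i) (isT : true).
by apply/eqP; rewrite -sqrf_eq0 hij.
Qed.

Lemma dotm0l m k (Y : 'M[R]_(m,k)) : dotm 0 Y = 0.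
Proof. by rewrite /dotm big1 // => i _; rewrite big1 // => j _; rewrite mxE mul0r. Qed.

Lemma CS m k (X Y : 'M[R]_(m,k)) : dotm X Y <= enorm X * enorm Y.
Proof.
set a := enorm X; set b := enorm Y.
have ha : 0 <= a by apply: enorm_ge0.
have hb : 0 <= b by apply: enorm_ge0.
have h := enorm_ge0 (b *: X - a *: Y).
have h2 : 0 <= dotm (b *: X - a *: Y) (b *: X - a *: Y) by rewrite -enorm_sqr sqr_ge0.
rewrite !dotmBl !dotmBr !dotmZl !dotmZr -!enorm_sqr (dotmC Y X) -/a -/b in h2.
have [ab0|abp] := eqVneq (a * b) 0.
  move/eqP: ab0; rewrite mulf_eq0 => /orP [/eqP a0|/eqP b0].
    by rewrite (enorm_eq0 a0) dotm0l a0 mul0r.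
  by rewrite dotmC (enorm_eq0 b0) dotm0l b0 mulr0.
have abp' : 0 < a * b by rewrite lt_def abp mulr_ge0.
have : a * b * dotm X Y <= a * b * (a * b) by nra.
by rewrite ler_pM2l.
Qed.

Lemma enormZ m k c (X : 'M[R]_(m,k)) : enorm (c *: X) = `|c| * enorm X.
Proof.
rewrite /enorm -sqrtr_sqr -sqrtrM ?sqr_ge0 //; congr Num.sqrt.
rewrite mulr_sumr; apply: eq_bigr => i _; rewrite mulr_sumr.
by apply: eq_bigr => j _; rewrite mxE exprMn.
Qed.

Lemma enormN m k (X : 'M[R]_(m,k)) : enorm (- X) = enorm X.
Proof. by rewrite -scaleN1r enormZ normrN1 mul1r. Qed.

Lemma enorm0 m k : enorm (0 : 'M[R]_(m,k)) = 0.
Proof. by rewrite -(scale0r 0) enormZ normr0 mul0r. Qed.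

Lemma CSabs m k (X Y : 'M[R]_(m,k)) : `|dotm X Y| <= enorm X * enorm Y.
Proof.
rewrite ler_norml CS andbT lerNl -dotmNl -(enormN X).
exact: CS.
Qed.

Lemma le_enorm m k (X : 'M[R]_(m,k)) c : 0 <= c -> enorm X ^+ 2 <= c ^+ 2 -> enorm X <= c.
Proof. by move=> c0; rewrite (@ler_pXn2r _ 2) // nnegrE // enorm_ge0. Qed.

Lemma enormD m k (X Y : 'M[R]_(m,k)) : enorm (X + Y) <= enorm X + enorm Y.
Proof.
apply: le_enorm; first by rewrite addr_ge0 // enorm_ge0.
rewrite enorm_sqr dotmDl !(dotmC _ (X + Y)) !dotmDl (dotmC X Y) -!enorm_sqr.
have := CS X Y => h.
rewrite sqrrD (dotmC Y X) mulr2n; lra.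
Qed.

Lemma enormB m k (X Y : 'M[R]_(m,k)) : enorm (X - Y) <= enorm X + enorm Y.
Proof. by rewrite -(enormN Y) enormD. Qed.

Lemma dotm_cV n (u v : 'cV[R]_n) : dotm u v = \sum_i u i 0 * v i 0.
Proof. by apply: eq_bigr => i _; rewrite big_ord1. Qed.

Lemma enorm_cV_sqr n (u : 'cV[R]_n) : enorm u ^+ 2 = \sum_i u i 0 ^+ 2.
Proof. by rewrite enorm_sqr dotm_cV; apply: eq_bigr => i _; rewrite expr2. Qed.

Lemma frob_bound n (M : 'M[R]_n) (x : 'cV[R]_n) : enorm (M *m x) <= enorm M * enorm x.
Proof.
apply: le_enorm; first by rewrite mulr_ge0 // enorm_ge0.
rewrite enorm_cV_sqr exprMn enorm_sqr dotmE mulr_suml.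
apply: ler_sum => i _.
have -> : (M *m x) i 0 = dotm (row i M)^T x.
  by rewrite mxE dotm_cV; apply: eq_bigr => k _; rewrite !mxE.
have e : \sum_j M i j ^+ 2 = enorm (row i M)^T ^+ 2.
  by rewrite enorm_cV_sqr; apply: eq_bigr => k _; rewrite !mxE.
rewrite e -exprMn -[X in X <= _]real_normK ?num_real // (@ler_pXn2r _ 2) // ?nnegrE ?mulr_ge0 ?enorm_ge0 //.
exact: CSabs.
Qed.

Definition specset n (M : 'M[R]_n) :=
  [set enorm (M *m x) | x in [set x : 'cV[R]_n | enorm x <= 1]]%classic.

Lemma specset_ub n (M : 'M[R]_n) : has_ubound (specset M).
Proof.
exists (enorm M) => y [x /= hx <-].
apply: le_trans (frob_bound M x) _.
by rewrite -{2}(mulr1 (enorm M)) ler_wpM2l // enorm_ge0.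
Qed.

Lemma specset_n0 n (M : 'M[R]_n) : (specset M !=set0)%classic.
Proof. by exists (enorm (M *m (0 : 'cV[R]_n))); exists 0 => //=; rewrite enorm0. Qed.

Lemma spec_ub n (M : 'M[R]_n) (x : 'cV[R]_n) : enorm x <= 1 -> enorm (M *m x) <= specnorm M.
Proof. by move=> hx; apply: (ub_le_sup (specset_ub M)); exists x. Qed.

Lemma spec_ge0 n (M : 'M[R]_n) : 0 <= specnorm M.
Proof. by rewrite -(@enorm0 n 1) -(mulmx0 _ M); apply: spec_ub; rewrite enorm0. Qed.

Lemma spec_vec n (M : 'M[R]_n) (x : 'cV[R]_n) : enorm (M *m x) <= specnorm M * enorm x.
Proof.
have [x0|xn0] := eqVneq (enorm x) 0.
  by rewrite (enorm_eq0 x0) mulmx0 !enorm0 mulr0.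
have xp : 0 < enorm x by rewrite lt_def xn0 enorm_ge0.
have h := @spec_ub n M ((enorm x)^-1 *: x).
rewrite enormZ ger0_norm ?invr_ge0 ?enorm_ge0 // mulVf // lexx in h.
have := h isT; rewrite -scalemxAr enormZ ger0_norm ?invr_ge0 ?enorm_ge0 //.
by rewrite ler_pdivrMl // mulrC.
Qed.

Lemma spec_le n (M : 'M[R]_n) c : 0 <= c ->
  (forall x : 'cV[R]_n, enorm (M *m x) <= c * enorm x) -> specnorm M <= c.
Proof.
move=> c0 h; apply: ge_sup; first exact: specset_n0.
move=> y [x /= hx <-]; apply: le_trans (h x) _.
by rewrite -{2}(mulr1 c) ler_wpM2l.
Qed.

Lemma spec0 n : specnorm (0 : 'M[R]_n) = 0.
Proof.
apply/eqP; rewrite eq_le spec_ge0 andbT; apply: spec_le => // x.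
by rewrite mul0mx enorm0 mul0r.
Qed.

Lemma specD n (M N : 'M[R]_n) : specnorm (M + N) <= specnorm M + specnorm N.
Proof.
apply: spec_le => [|x]; first by rewrite addr_ge0 ?spec_ge0.
rewrite mulmxDl mulrDl; apply: le_trans (enormD _ _) _.
by rewrite lerD ?spec_vec.
Qed.

Lemma specZ n c (M : 'M[R]_n) : specnorm (c *: M) <= `|c| * specnorm M.
Proof.
apply: spec_le => [|x]; first by rewrite mulr_ge0 ?spec_ge0.
by rewrite -scalemxAl enormZ -mulrA ler_wpM2l ?spec_vec.
Qed.

Lemma specN n (M : 'M[R]_n) : specnorm (- M) <= specnorm M.
Proof. by rewrite -scaleN1r; apply: le_trans (specZ _ _) _; rewrite normrN1 mul1r. Qed.

Lemma specB n (M N : 'M[R]_n) : specnorm (M - N) <= specnorm M + specnorm N.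
Proof. by apply: le_trans (specD _ _) _; rewrite lerD ?specN. Qed.

Lemma specM n (M N : 'M[R]_n) : specnorm (M *m N) <= specnorm M * specnorm N.
Proof.
apply: spec_le => [|x]; first by rewrite mulr_ge0 ?spec_ge0.
rewrite -mulmxA -mulrA; apply: le_trans (spec_vec _ _) _.
by rewrite ler_wpM2l ?spec_ge0 ?spec_vec.
Qed.

Lemma spec1 n : specnorm (1%:M : 'M[R]_n) <= 1.
Proof. by apply: spec_le => // x; rewrite mul1mx mul1r. Qed.

Lemma dotm_tr n (M : 'M[R]_n) (u v : 'cV[R]_n) : dotm (M^T *m u) v = dotm u (M *m v).
Proof.
rewrite !dotm_cV.
under eq_bigr do rewrite !mxE mulr_suml.
rewrite exchange_big /=; apply: eq_bigr => k _.
rewrite mxE mulr_sumr; apply: eq_bigr => i _; rewrite !mxE; ring.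
Qed.

Lemma spec_tr n (M : 'M[R]_n) : specnorm M^T <= specnorm M.
Proof.
apply: spec_le => [|u]; first by rewrite spec_ge0.
have h : enorm (M^T *m u) ^+ 2 <= specnorm M * enorm u * enorm (M^T *m u).
  rewrite enorm_sqr dotm_tr; apply: le_trans (CS _ _) _.
  rewrite (mulrC (specnorm M)) -mulrA ler_wpM2l ?enorm_ge0 //.
  exact: spec_vec.
have [z|nz] := eqVneq (enorm (M^T *m u)) 0.
  by rewrite z mulr_ge0 ?spec_ge0 ?enorm_ge0.
have p : 0 < enorm (M^T *m u) by rewrite lt_def nz enorm_ge0.
by rewrite expr2 ler_pM2r // in h.
Qed.

Lemma entry_le_spec n (M : 'M[R]_n) i k : `|M i k| <= specnorm M.
Proof.
have h := @spec_ub n M (delta_mx k 0).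
have e1 : enorm (delta_mx k 0 : 'cV[R]_n) = 1.
  rewrite /enorm (bigD1 k) //= big_ord1 mxE !eqxx /= expr1n big1 ?addr0 ?sqrtr1 //.
  by move=> j /negbTE jk; rewrite big_ord1 mxE jk /= expr0n.
rewrite e1 lexx in h; apply: le_trans (h isT).
rewrite -(@ler_pXn2r _ 2) ?nnegrE ?enorm_ge0 // real_normK ?num_real //.
rewrite enorm_cV_sqr (bigD1 i) //=.
have -> : (M *m (delta_mx k 0 : 'cV[R]_n)) i 0 = M i k.
  rewrite mxE (bigD1 k) //= mxE !eqxx mulr1 big1 ?addr0 // => j /negbTE jk.
  by rewrite mxE jk mulr0.
by rewrite lerDl sumr_ge0 // => j _; rewrite sqr_ge0.
Qed.

Definition qf n (Z : 'M[R]_n) (x : 'cV[R]_n) : R := (x^T *m Z *m x) 0 0.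

Lemma qfB n (Y X : 'M[R]_n) x : qf (Y - X) x = qf Y x - qf X x.
Proof. by rewrite /qf mulmxBr mulmxBl !mxE. Qed.

Lemma qfD n (Y X : 'M[R]_n) x : qf (Y + X) x = qf Y x + qf X x.
Proof. by rewrite /qf mulmxDr mulmxDl !mxE. Qed.

Lemma qfZ n c (Y : 'M[R]_n) x : qf (c *: Y) x = c * qf Y x.
Proof. by rewrite /qf -scalemxAr -scalemxAl !mxE. Qed.

Lemma qf_gram n (W : 'M[R]_n) x : qf (W *m W^T) x = enorm (W^T *m x) ^+ 2.
Proof.
rewrite /qf enorm_cV_sqr mulmxA -(trmxK W) -trmx_mul trmxK -mulmxA mxE.
by apply: eq_bigr => i _; rewrite !mxE expr2.
Qed.

Lemma qf1 n (x : 'cV[R]_n) : qf 1%:M x = enorm x ^+ 2.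
Proof. by rewrite -[1%:M]mulmx1 -{2}trmx1 qf_gram trmx1 mul1mx. Qed.

Lemma loewnerP n (X Y : 'M[R]_n) : (forall x, qf X x <= qf Y x) -> loewner_le X Y.
Proof.
move=> h x; have := h x; rewrite -subr_ge0 -qfB.
by [].
Qed.

Lemma lower_bound_inv n (M : 'M[R]_n) nu (x : 'cV[R]_n) :
  specnorm (1%:M - M) <= nu -> (1 - nu) * enorm x <= enorm (M *m x).
Proof.
move=> h.
have e : x = (1%:M - M) *m x + M *m x by rewrite mulmxBl mul1mx subrK.
have h1 : enorm x <= nu * enorm x + enorm (M *m x).
  rewrite {1}e; apply: le_trans (enormD _ _) _; rewrite lerD2r.
  apply: le_trans (spec_vec _ _) _.
  by rewrite ler_wpM2r ?enorm_ge0.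
lra.
Qed.

Lemma inv_bound n (M : 'M[R]_n) nu :
  specnorm (1%:M - M) <= nu -> nu < 1 ->
  M \in unitmx /\ specnorm (invmx M) <= (1 - nu)^-1.
Proof.
move=> h nu1.
have p : 0 < 1 - nu by rewrite subr_gt0.
have U : M \in unitmx.
  rewrite -unitmx_tr unitmxE unitfE; apply/negP => /det0P [v v0 vM].
  have : M *m v^T = 0 by rewrite -(trmxK M) -trmx_mul vM trmx0.
  move=> Mv; have := lower_bound_inv v^T h; rewrite Mv enorm0.
  move=> hh; have : enorm v^T = 0.
    apply/eqP; rewrite eq_le enorm_ge0 andbT.
    by rewrite -(pmulr_rle0 _ p).
  move/enorm_eq0 => /eqP; rewrite -trmx0 (inj_eq trmx_inj).
  by rewrite (negbTE v0).
split => //; apply: spec_le => [|y]; first by rewrite invr_ge0 ltW.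
have := lower_bound_inv (invmx M *m y) h.
rewrite mulmxA mulmxV // mul1mx => hh.
by rewrite mulrC ler_pdivlMr // mulrC.
Qed.

End Norms.

Section Int.
Variable R : realType.
Notation mu := (@lebesgue_measure R).
Definition I01 (f : R -> R) := Rintegral mu `[0%R, 1%R]%classic f.

Lemma lip_cont (f : R -> R) K : (forall a b, `|f a - f b| <= K * `|a - b|) -> continuous f.
Proof.
move=> h x; apply/cvgrPdist_le => e e0.
have K1 : 0 < `|K| + 1 by rewrite ltr_wpDl.
apply/nbhs_ballP; exists (e / (`|K| + 1)); first by rewrite /= divr_gt0.
move=> y /=; rewrite /ball /= => hy.
apply: le_trans (h x y) _.
apply: le_trans (_ : `|K| * `|x - y| <= _).
  by rewrite ler_wpM2r // ler_norm.
rewrite ltr_pdivlMr // in hy.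
have : `|K| * `|x - y| <= `|x - y| * (`|K| + 1) by rewrite mulrDr mulr1 mulrC lerDl.
move=> h2; apply: le_trans h2 _; exact: ltW.
Qed.

Lemma int01 (f : R -> R) : continuous f -> mu.-integrable `[0%R, 1%R]%classic (EFin \o f).
Proof.
move=> cf; apply: continuous_compact_integrable; first exact: segment_compact.
exact: continuous_subspaceT.
Qed.

Lemma cont_cst (c : R) : continuous (fun _ : R => c).
Proof. by move=> x; apply: cvg_cst. Qed.

Lemma cont_add (f g : R -> R) : continuous f -> continuous g -> continuous (fun a => f a + g a).
Proof. move=> cf cg x; exact: (cvgD (cf x) (cg x)). Qed.

Lemma cont_mul (f g : R -> R) : continuous f -> continuous g -> continuous (fun a => f a * g a).
Proof. move=> cf cg x; exact: (cvgM (cf x) (cg x)). Qed.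

Lemma cont_sub (f g : R -> R) : continuous f -> continuous g -> continuous (fun a => f a - g a).
Proof.
move=> cf cg; apply: cont_add => // x.
have -> : (fun a => - g a) = (fun a => (-1) * g a) by apply: funext => a; rewrite mulN1r.
by apply: cont_mul => //; apply: cont_cst.
Qed.

Lemma cont_sum (I : Type) (s : seq I) (f : I -> R -> R) :
  (forall i, continuous (f i)) -> continuous (fun a => \sum_(i <- s) f i a).
Proof.
move=> cf; elim: s => [|i s IH].
  under eq_fun do rewrite big_nil; exact: cont_cst.
under eq_fun do rewrite big_cons; exact: cont_add.
Qed.

Lemma mu01 : fine (mu `[0%R, 1%R]%classic) = 1.
Proof. by rewrite lebesgue_measure_itv /= lte_fin ltr01 /= subr0. Qed.

Lemma I01_cst (c : R) : I01 (fun _ => c) = c.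
Proof. by rewrite /I01 Rintegral_cst // mu01 mulr1. Qed.

Lemma I01D (f g : R -> R) : continuous f -> continuous g ->
  I01 (fun a => f a + g a) = I01 f + I01 g.
Proof. by move=> cf cg; rewrite /I01 RintegralD //; apply: int01. Qed.

Lemma I01B (f g : R -> R) : continuous f -> continuous g ->
  I01 (fun a => f a - g a) = I01 f - I01 g.
Proof. by move=> cf cg; rewrite /I01 RintegralB //; apply: int01. Qed.

Lemma I01Zl (c : R) (f : R -> R) : continuous f -> I01 (fun a => c * f a) = c * I01 f.
Proof. by move=> cf; rewrite /I01 RintegralZl //; apply: int01. Qed.

Lemma I01Zr (c : R) (f : R -> R) : continuous f -> I01 (fun a => f a * c) = I01 f * c.
Proof. by move=> cf; rewrite /I01 RintegralZr //; apply: int01. Qed.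

Lemma I01_sum (I : Type) (s : seq I) (f : I -> R -> R) :
  (forall i, continuous (f i)) ->
  I01 (fun a => \sum_(i <- s) f i a) = \sum_(i <- s) I01 (f i).
Proof.
move=> cf; elim: s => [|i s IH].
  by under eq_fun do rewrite big_nil; rewrite I01_cst big_nil.
under eq_fun do rewrite big_cons.
by rewrite I01D ?IH ?big_cons //; apply: cont_sum.
Qed.

Lemma I01_le (f g : R -> R) : continuous f -> continuous g ->
  (forall a, 0 <= a <= 1 -> f a <= g a) -> I01 f <= I01 g.
Proof.
move=> cf cg h; rewrite /I01; apply: le_Rintegral => //; try exact: int01.
Qed.

Lemma mxint_diff n (G H : R -> 'M[R]_n) K :
  (forall i k, continuous (fun a => G a i k)) ->
  (forall i k, continuous (fun a => H a i k)) -> 0 <= K ->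
  (forall a, 0 <= a <= 1 -> specnorm (G a - H a) <= K) ->
  specnorm (mxint01 G - mxint01 H) <= K.
Proof.
move=> cG cH K0 hK; apply: spec_le => // x.
set y := (mxint01 G - mxint01 H) *m x.
pose phi a := \sum_i \sum_k y i 0 * ((G a i k - H a i k) * x k 0).
have cphi i k : continuous (fun a => y i 0 * ((G a i k - H a i k) * x k 0)).
  apply: cont_mul; first exact: cont_cst.
  by apply: cont_mul; [apply: cont_sub|apply: cont_cst].
have e1 : dotm y y = I01 phi.
  rewrite /phi I01_sum; last by move=> i; apply: cont_sum.
  rewrite dotm_cV; apply: eq_bigr => i _.
  rewrite I01_sum // {1}/y mxE mulr_suml; apply: eq_bigr => k _.
  rewrite I01Zl; last by apply: cont_mul; [apply: cont_sub|apply: cont_cst].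
  rewrite I01Zr; last by apply: cont_sub.
  rewrite I01B // !mxE /I01; ring.
have e2 a : phi a = dotm y ((G a - H a) *m x).
  rewrite /phi dotm_cV; apply: eq_bigr => i _.
  rewrite [((G a - H a) *m x) i 0]mxE mulr_sumr; apply: eq_bigr => k _; rewrite !mxE.
  by [].
have h : dotm y y <= enorm y * (K * enorm x).
  rewrite e1 -[X in _ <= X]I01_cst; apply: I01_le.
  - by move=> ?; apply: cont_sum => i; apply: cont_sum.
  - exact: cont_cst.
  move=> a ha; rewrite e2; apply: le_trans (CS _ _) _.
  rewrite ler_wpM2l ?enorm_ge0 //; apply: le_trans (spec_vec _ _) _.
  by rewrite ler_wpM2r ?enorm_ge0 ?hK.
rewrite -enorm_sqr in h.
have [z|nz] := eqVneq (enorm y) 0.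
  by rewrite z mulr_ge0 ?enorm_ge0.
have p : 0 < enorm y by rewrite lt_def nz enorm_ge0.
by rewrite expr2 ler_pM2l // in h.
Qed.

End Int.

End P1.
Import P1.

Module P2.
Set Implicit Arguments. Unset Strict Implicit. Unset Printing Implicit Defensive.

Section Main.
Variables (R : realType) (n : nat) (F : 'rV[R]_n -> 'rV[R]_n)
  (ell Lam eta L0 : R) (zm1 z0 : 'rV[R]_n) (T : nat).
Hypothesis Hlip : forall z z', enorm (F z - F z') <= ell * enorm (z - z').
Hypothesis HJ : forall z z', specnorm (Jac F z - Jac F z') <= Lam * enorm (z - z').
Hypothesis Heta : 0 < eta.
Hypothesis HL0 : 0 < L0.
Hypothesis HAB : forall t : nat, (t <= T)%N ->
     Num.max (eta * specnorm (At F eta zm1 z0 t))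
             (eta * specnorm (Bt F eta zm1 z0 t)) <= L0.
Hypothesis HL0s : L0 <= Num.sqrt (1 / 200).
Hypothesis Hell : eta * ell <= 2 / 3.

Local Notation A := (At F eta zm1 z0).
Local Notation B := (Bt F eta zm1 z0).
Local Notation C := (Ct F eta zm1 z0 T).
Local Notation z := (zt F eta zm1 z0).
Local Notation zm := (ztm1 F eta zm1 z0).
Local Notation w := (wt F eta zm1 z0).
Local Notation del := (deltat F eta zm1 z0).
Local Notation M t := (1%:M - eta *: A t + C t).
Local Notation N t := (eta *: A t - C t).

Lemma L0sq : L0 ^+ 2 <= 1 / 200.
Proof.
have h : L0 ^+ 2 <= Num.sqrt (1 / 200) ^+ 2.
  by rewrite (@ler_pXn2r _ 2) // nnegrE ?sqrtr_ge0 // ltW.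
by rewrite sqr_sqrtr // in h.
Qed.

Lemma L0le : L0 <= 1 / 14.
Proof. have := L0sq; nra. Qed.

Lemma z_succ j : z j.+1 = z j - (2 * eta) *: F (z j) + eta *: F (zm j).
Proof. by []. Qed.

Lemma zm_succ j : zm j.+1 = z j.
Proof. by []. Qed.

Lemma w_succ j : w j.+1 = w j - eta *: F (z j).
Proof.
rewrite /wt z_succ zm_succ; apply/matrixP => i k; rewrite !mxE; ring.
Qed.

Lemma del_ge0 j : 0 <= del j.
Proof. by rewrite /deltat le_max enorm_ge0. Qed.

Lemma Fz_le j : enorm (F (z j)) <= del j.
Proof. by rewrite /deltat le_max lexx. Qed.

Lemma Fzm_le j : enorm (F (zm j)) <= del j.
Proof. by rewrite /deltat le_max lexx orbT. Qed.

Lemma del_succ j : del j.+1 <= 3 * del j.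
Proof.
have h1 : enorm (F (z j.+1)) <= 3 * del j.
  have e : F (z j.+1) = F (z j) + (F (z j.+1) - F (z j)) by rewrite addrC subrK.
  rewrite e; apply: le_trans (enormD _ _) _.
  have h2 : enorm (z j.+1 - z j) <= eta * (3 * del j).
    have e2 : z j.+1 - z j = eta *: (F (zm j) - 2 *: F (z j)).
      rewrite z_succ; apply/matrixP => i k; rewrite !mxE; ring.
    rewrite e2 enormZ gtr0_norm //; apply: ler_wpM2l; first exact: ltW.
    apply: le_trans (enormB _ _) _; rewrite enormZ ger0_norm //.
    have := Fz_le j; have := Fzm_le j; lra.
  have h3 : enorm (F (z j.+1) - F (z j)) <= 2 * del j.
    apply: le_trans (Hlip _ _) _.
    have := enorm_ge0 (z j.+1 - z j); have := del_ge0 j.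
    case: (lerP 0 ell) => hl.
      move=> _ _; apply: le_trans (_ : ell * (eta * (3 * del j)) <= _).
        by rewrite ler_wpM2l.
      have hh : 0 <= (2 / 3 - eta * ell) * del j.
        by rewrite mulr_ge0 ?del_ge0 // subr_ge0.
      lra.
    move=> d0 e0; apply: le_trans (_ : 0 <= _); last by lra.
    by rewrite nmulr_rle0.
  have := Fz_le j; lra.
have h0 : enorm (F (z j)) <= 3 * del j by have := Fz_le j; have := del_ge0 j; lra.
by rewrite [X in X <= _]/deltat ge_max h1.
Qed.

Lemma entry_diff (X Y : 'M[R]_n) i k : `|X i k - Y i k| <= specnorm (X - Y).
Proof. by have := entry_le_spec (X - Y) i k; rewrite !mxE. Qed.

Lemma Pdiff (u v : 'rV[R]_n) a b :
  (u - ((1 - a) * eta) *: v) - (u - ((1 - b) * eta) *: v) = ((a - b) * eta) *: v.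
Proof. apply/matrixP => i k; rewrite !mxE; ring. Qed.

Lemma Jcont (u v : 'rV[R]_n) i k :
  continuous (fun a : R => Jac F (u - ((1 - a) * eta) *: v) i k).
Proof.
apply: (@lip_cont _ _ (`|Lam| * (eta * enorm v))) => a b.
apply: le_trans (entry_diff _ _ _ _) _.
apply: le_trans (HJ _ _) _.
rewrite Pdiff enormZ normrM (gtr0_norm Heta).
have -> : `|Lam| * (eta * enorm v) * `|a - b| = `|Lam| * (`|a - b| * eta * enorm v) by ring.
apply: ler_wpM2r; [by rewrite !mulr_ge0 ?enorm_ge0 // ltW | exact: ler_norm].
Qed.

Lemma dA (HLam : 0 <= Lam) j : specnorm (A j.+1 - A j) <= Lam * (eta * del j.+1).
Proof.
rewrite /At; apply: mxint_diff; try (by move=> i k; apply: Jcont).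
  by rewrite mulr_ge0 // mulr_ge0 ?del_ge0 // ltW.
move=> a /andP [a0 a1].
apply: le_trans (HJ _ _) _; apply: ler_wpM2l => //.
have e : (w j.+1 - ((1 - a) * eta) *: F (z j.+1)) - (w j - ((1 - a) * eta) *: F (z j))
   = - ((a * eta) *: F (z j) + ((1 - a) * eta) *: F (z j.+1)).
  rewrite w_succ; apply/matrixP => i k; rewrite !mxE; ring.
rewrite e enormN; apply: le_trans (enormD _ _) _.
have eta0 := ltW Heta.
rewrite !enormZ !ger0_norm ?mulr_ge0 ?subr_ge0 //.
have h1 : enorm (F (z j)) <= del j.+1 by have := Fzm_le j.+1.
have h2 := Fz_le j.+1.
have e1 : eta * del j.+1 = a * eta * del j.+1 + (1 - a) * eta * del j.+1 by ring.
have k1 : a * eta * enorm (F (z j)) <= a * eta * del j.+1 by rewrite ler_wpM2l ?mulr_ge0.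
have k2 : (1 - a) * eta * enorm (F (z j.+1)) <= (1 - a) * eta * del j.+1.
  by rewrite ler_wpM2l ?mulr_ge0 ?subr_ge0.
rewrite e1; exact: lerD.
Qed.

Lemma C_T : C T = 0.
Proof. by rewrite /Ct subnn. Qed.

Lemma C_rec j : (j < T)%N -> C j = invmx (M j.+1) *m (eta *: N j.+1) *m B j.+1.
Proof.
move=> jT; rewrite /Ct (_ : (T - j = (T - j.+1).+1)%N); last by rewrite subnSK.
set k := (T - j.+1)%N.
have -> : Caux F eta zm1 z0 T k.+1 =
  invmx (1%:M - eta *: A (T - k) + Caux F eta zm1 z0 T k) *m
  (eta *: (eta *: A (T - k) - Caux F eta zm1 z0 T k)) *m B (T - k) by [].
by rewrite /k subKn.
Qed.

End Main.

End P2.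
Import P2.

Module P3.
Set Implicit Arguments. Unset Strict Implicit. Unset Printing Implicit Defensive.

Lemma quad_final (R : realType) (L s E : R) : 0 <= s -> 0 <= E ->
  (6 / 5 * L * s + 24 / 5 * L * E) ^+ 2 <= 8 * L ^+ 2 * s ^+ 2 + 30 * L ^+ 2 * E ^+ 2.
Proof.
move=> s0 E0.
have h : (6 / 5 * s + 24 / 5 * E) ^+ 2 <= 8 * s ^+ 2 + 30 * E ^+ 2.
  have e : 8 * s ^+ 2 + 30 * E ^+ 2 - (6 / 5 * s + 24 / 5 * E) ^+ 2 =
    (144 / 25) * (s - E) ^+ 2 + 20 / 25 * s ^+ 2 + 30 / 25 * E ^+ 2 by field.
  rewrite -subr_ge0 e.
  by rewrite !addr_ge0 // mulr_ge0 // sqr_ge0.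
have -> : (6 / 5 * L * s + 24 / 5 * L * E) ^+ 2 = L ^+ 2 * (6 / 5 * s + 24 / 5 * E) ^+ 2 by field.
have -> : 8 * L ^+ 2 * s ^+ 2 + 30 * L ^+ 2 * E ^+ 2 = L ^+ 2 * (8 * s ^+ 2 + 30 * E ^+ 2) by field.
by rewrite ler_wpM2l // sqr_ge0.
Qed.
Lemma rec_alg (R : realType) (L0 s E w a U : R) : 0 < L0 -> L0 <= 1 / 14 -> 0 <= s -> 0 <= E -> 1 <= w ->
  a <= s + ((3 * (3 * w) - 3) / 2) * E ->
  U <= 6 / 5 * L0 * s + (32 / 5 * L0 * (3 * w) - 8 / 5 * L0) * E ->
  49 / 45 * L0 * (a + U) <= 6 / 5 * L0 * s + (32 / 5 * L0 * w - 8 / 5 * L0) * E.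
Proof.
move=> HL0 h1 s0 E0 w1 ha hU.
have q0 : 0 <= 49 / 45 * L0 by have := ltW HL0; lra.
apply: le_trans (_ : 49 / 45 * L0 * (s + ((3 * (3 * w) - 3) / 2) * E +
   (6 / 5 * L0 * s + (32 / 5 * L0 * (3 * w) - 8 / 5 * L0) * E)) <= _).
  by apply: ler_wpM2l => //; apply: lerD.
have l0 := ltW HL0.
have c1 : 0 <= L0 * (6 / 5 - 49 / 45 - 49 / 45 * (6 / 5) * L0) by apply: mulr_ge0 => //; lra.
have c2 : 0 <= L0 * (32 / 5 - 49 / 45 * (9 / 2) - 49 / 45 * (32 / 5) * 3 * L0) by apply: mulr_ge0 => //; lra.
have c3 : 0 <= L0 * (49 / 45 * (3 / 2) - 8 / 5 + 49 / 45 * (8 / 5) * L0) by apply: mulr_ge0 => //; lra.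
have d1 := mulr_ge0 c1 s0.
have d2 := mulr_ge0 (mulr_ge0 c2 E0) (le_trans ler01 w1).
have d3 := mulr_ge0 c3 E0.
rewrite -subr_ge0.
have -> : 6 / 5 * L0 * s + (32 / 5 * L0 * w - 8 / 5 * L0) * E -
  49 / 45 * L0 * (s + ((3 * (3 * w) - 3) / 2) * E +
   (6 / 5 * L0 * s + (32 / 5 * L0 * (3 * w) - 8 / 5 * L0) * E))
  = L0 * (6 / 5 - 49 / 45 - 49 / 45 * (6 / 5) * L0) * s
   + L0 * (32 / 5 - 49 / 45 * (9 / 2) - 49 / 45 * (32 / 5) * 3 * L0) * E * w
   + L0 * (49 / 45 * (3 / 2) - 8 / 5 + 49 / 45 * (8 / 5) * L0) * E by ring.
by rewrite addr_ge0 // addr_ge0.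
Qed.

Section Gen.
Variables (R : realType) (n : nat) (A B C : nat -> 'M[R]_n) (eta L0 : R) (T : nat).
Hypothesis Heta : 0 < eta.
Hypothesis HL0 : 0 < L0.
Hypothesis HL0sq : L0 ^+ 2 <= 1 / 200.
Hypothesis HA : forall j, (j <= T)%N -> specnorm (eta *: A j) <= L0.
Hypothesis HB : forall j, (j <= T)%N -> specnorm (eta *: B j) <= L0.
Local Notation M t := (1%:M - eta *: A t + C t).
Local Notation N t := (eta *: A t - C t).
Hypothesis HCT : C T = 0.
Hypothesis HCrec : forall j, (j < T)%N ->
  C j = invmx (M j.+1) *m (eta *: N j.+1) *m B j.+1.

Lemma L0leg : L0 <= 1 / 14.
Proof.
have h : L0 ^+ 2 <= (1 / 14) ^+ 2 by apply: le_trans HL0sq _; rewrite expr2; lra.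
have p1 : (0 : R) <= 1 / 14 by lra.
by move: h; rewrite (@ler_pXn2r _ 2) // nnegrE // ltW.
Qed.

Lemma MN_gen (X Y : 'M[R]_n) : 1%:M - (1%:M - X + Y) = X - Y.
Proof. apply/matrixP => i k; rewrite !mxE; ring. Qed.

Lemma comm_inv (X : 'M[R]_n) : X \in unitmx ->
  invmx X *m (1%:M - X) = (1%:M - X) *m invmx X.
Proof. by move=> U; rewrite mulmxBr mulmxBl mulmx1 mul1mx mulVmx // mulmxV. Qed.

Lemma step j : (j <= T)%N -> specnorm (C j) <= 2 * L0 ^+ 2 ->
  [/\ specnorm (N j) <= L0 + 2 * L0 ^+ 2, M j \in unitmx
    & specnorm (invmx (M j)) <= 49 / 45].
Proof.
move=> jT hC.
have hN : specnorm (N j) <= L0 + 2 * L0 ^+ 2.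
  by apply: le_trans (specB _ _) _; rewrite lerD // HA.
have h1 := L0leg.
have h2 := HL0sq.
have nu1 : L0 + 2 * L0 ^+ 2 < 1 by lra.
have hN' : specnorm (1%:M - M j) <= L0 + 2 * L0 ^+ 2 by rewrite MN_gen.
have [U hi] := inv_bound hN' nu1.
split => //; apply: le_trans hi _.
rewrite -div1r ler_pdivrMr; last by lra.
lra.
Qed.

Lemma Cbound j : (j <= T)%N -> specnorm (C j) <= 2 * L0 ^+ 2.
Proof.
move=> jT; move eq: (T - j)%N => k; elim: k j jT eq => [|k IH] j jT eq.
  have -> : j = T by apply/eqP; rewrite eqn_leq jT /= -subn_eq0 eq.
  by rewrite HCT spec0 mulr_ge0 // sqr_ge0.
have jT' : (j < T)%N by rewrite -subn_gt0 eq.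
have hC1 := IH j.+1 jT' (ltac:(by rewrite subnS eq)).
have [hN U hi] := step jT' hC1.
rewrite HCrec // -mulmxA -scalemxAl scalemxAr mulmxA.
apply: le_trans (specM _ _) _.
have hB := HB jT'.
have hIN : specnorm (invmx (M j.+1) *m N j.+1) <= 49 / 45 * (L0 + 2 * L0 ^+ 2).
  apply: le_trans (specM _ _) _; apply: ler_pM => //; exact: spec_ge0.
apply: le_trans (_ : 49 / 45 * (L0 + 2 * L0 ^+ 2) * L0 <= _).
  by apply: ler_pM => //; exact: spec_ge0.
have h1 := L0leg.
have hl := ltW HL0; nra.
Qed.

Lemma sqrt2_ge : (49 / 45 : R) <= Num.sqrt 2.
Proof.
have h : (0 : R) <= 49 / 45 by lra.
rewrite -(ger0_norm h) -sqrtr_sqr ler_sqrt; last by lra.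
rewrite expr2; lra.
Qed.

Lemma item1 t : (1 <= t <= T)%N -> specnorm (C t) <= 2 * L0 ^+ 2.
Proof. by case/andP => _ tT; apply: Cbound. Qed.

Lemma item2 t : (1 <= t <= T)%N ->
  M t \in unitmx /\ specnorm (invmx (M t)) <= Num.sqrt 2.
Proof.
case/andP => _ tT; have [_ U hi] := step tT (Cbound tT).
by split => //; apply: le_trans hi sqrt2_ge.
Qed.

Lemma MN2 (X Y : 'M[R]_n) : 1%:M - X + Y = 1%:M - (X - Y).
Proof. apply/matrixP => i k; rewrite !mxE; ring. Qed.

Lemma item3 t : (1 <= t <= T)%N ->
  specnorm (N t) <= 2 * L0 /\ specnorm (M t) <= 1 + 2 * L0.
Proof.
case/andP => _ tT; have [hN U hi] := step tT (Cbound tT).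
have h1 := L0leg; have h2 := HL0sq.
have h3 : 0 <= L0 * (1/14 - L0) by rewrite mulr_ge0 ?subr_ge0 // ltW.
have hN2 : specnorm (N t) <= 2 * L0 by apply: le_trans hN _; rewrite expr2; nra.
split => //; rewrite MN2; apply: le_trans (specB _ _) _.
by apply: lerD => //; apply: spec1.
Qed.

Lemma trB (X Y : 'M[R]_n) : (X - Y)^T = X^T - Y^T.
Proof. by apply/matrixP => i k; rewrite !mxE. Qed.

Lemma comm_MN t : M t \in unitmx -> invmx (M t) *m N t = N t *m invmx (M t).
Proof. by move=> U; rewrite -[N t](MN_gen (eta *: A t) (C t)) comm_inv. Qed.

Lemma item4 t : (t < T)%N ->
  loewner_le (invmx (M t.+1) *m N t.+1 *m (N t.+1)^T *m (invmx (M t.+1))^T)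
             (3 *: ((eta *: A t.+1) *m (eta *: A t.+1)^T + C t.+1 *m (C t.+1)^T)).
Proof.
move=> tT; have [hN U hi] := step tT (Cbound tT).
apply: loewnerP => x.
have -> : invmx (M t.+1) *m N t.+1 *m (N t.+1)^T *m (invmx (M t.+1))^T
   = (N t.+1 *m invmx (M t.+1)) *m (N t.+1 *m invmx (M t.+1))^T.
  by rewrite -comm_MN // trmx_mul !mulmxA.
rewrite qf_gram qfZ qfD !qf_gram trmx_mul -mulmxA.
set a := enorm ((eta *: A t.+1)^T *m x).
set b := enorm ((C t.+1)^T *m x).
have h1 : enorm ((N t.+1)^T *m x) <= a + b.
  by rewrite trB mulmxBl; apply: enormB.
have h2 : enorm ((invmx (M t.+1))^T *m ((N t.+1)^T *m x)) <= 49 / 45 * (a + b).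
  apply: le_trans (spec_vec _ _) _; apply: ler_pM => //; try exact: spec_ge0; try exact: enorm_ge0.
  exact: le_trans (spec_tr _) hi.
have a0 : 0 <= a by apply: enorm_ge0.
have b0 : 0 <= b by apply: enorm_ge0.
set E := enorm _ in h2.
have E0 : 0 <= E by apply: enorm_ge0.
have h3 : E ^+ 2 <= (49 / 45 * (a + b)) ^+ 2.
  by rewrite (@ler_pXn2r _ 2) // nnegrE // mulr_ge0 // addr_ge0.
apply: le_trans h3 _; nra.
Qed.

Lemma item5 t e : (t < T)%N -> 0 <= e ->
  (forall m, (t + m <= T)%N ->
     specnorm (eta *: A (t + m) - eta *: A t) <= (3 ^+ m.+1 - 3) / 2 * e) ->
  loewner_le (C t *m (C t)^T)
    ((8 * L0 ^+ 2) *: ((eta *: A t) *m (eta *: A t)^T) + (30 * L0 ^+ 2 * e ^+ 2) *: 1%:M).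
Proof.
move=> tT e0 Hd; apply: loewnerP => x.
rewrite qf_gram qfD !qfZ qf_gram qf1.
set s := enorm ((eta *: A t)^T *m x).
have s0 : 0 <= s by apply: enorm_ge0.
set E := e * enorm x.
have E0 : 0 <= E by rewrite mulr_ge0 // enorm_ge0.
have hstep : forall j, (j < T)%N -> enorm ((C j)^T *m x) <=
    49 / 45 * L0 * (enorm ((eta *: A j.+1)^T *m x) + enorm ((C j.+1)^T *m x)).
  move=> j jT; have [hN U hi] := step jT (Cbound jT).
  rewrite HCrec // -mulmxA -scalemxAl scalemxAr mulmxA comm_MN // !trmx_mul -!mulmxA.
  apply: le_trans (spec_vec _ _) _.
  set a := enorm ((eta *: A j.+1)^T *m x).
  set b := enorm ((C j.+1)^T *m x).
  have h1 : enorm ((N j.+1)^T *m x) <= a + b.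
    by rewrite trB mulmxBl; apply: enormB.
  have h2 : enorm ((invmx (M j.+1))^T *m ((N j.+1)^T *m x)) <= 49 / 45 * (a + b).
    apply: le_trans (spec_vec _ _) _; apply: ler_pM => //; try exact: spec_ge0; try exact: enorm_ge0.
    exact: le_trans (spec_tr _) hi.
  have h3 : specnorm (eta *: B j.+1)^T <= L0 by apply: le_trans (spec_tr _) (HB jT).
  apply: le_trans (_ : L0 * (49 / 45 * (a + b)) <= _).
    by apply: ler_pM => //; [exact: spec_ge0 | exact: enorm_ge0].
  by rewrite mulrA (mulrC L0).
have hA : forall m, (t + m <= T)%N ->
    enorm ((eta *: A (t + m))^T *m x) <= s + (3 ^+ m.+1 - 3) / 2 * E.
  move=> m hm.
  have -> : (eta *: A (t + m))^T *m x =
      (eta *: A t)^T *m x + (eta *: A (t + m) - eta *: A t)^T *m x.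
    by rewrite trB mulmxBl addrCA subrr addr0.
  apply: le_trans (enormD _ _) _; rewrite lerD2l.
  apply: le_trans (spec_vec _ _) _.
  rewrite /E mulrA; apply: ler_wpM2r; first exact: enorm_ge0.
  exact: le_trans (spec_tr _) (Hd m hm).
have l0 := ltW HL0.
have inv : forall k m, (T - (t + m))%N = k -> (t + m <= T)%N ->
    enorm ((C (t + m))^T *m x) <= 6 / 5 * L0 * s + (32 / 5 * L0 * 3 ^+ m - 8 / 5 * L0) * E.
  elim=> [|k IH] m hk hm.
    have -> : (t + m)%N = T by apply/eqP; rewrite eqn_leq hm -subn_eq0 hk.
    rewrite HCT trmx0 mul0mx enorm0.
    have w1 : (1 : R) <= 3 ^+ m by rewrite exprn_ege1 //; lra.
    have hw : 0 <= (3 ^+ m - 1) * L0 by rewrite mulr_ge0 // subr_ge0.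
    apply: addr_ge0; first by rewrite mulr_ge0 // mulr_ge0 //; lra.
    apply: mulr_ge0 => //; lra.
  have hm' : (t + m < T)%N by rewrite -subn_gt0 hk.
  have IH' := IH m.+1 (ltac:(by rewrite addnS subnS hk)) (ltac:(by rewrite addnS)).
  rewrite addnS exprS in IH'.
  have hs := hstep (t + m)%N hm'.
  have ha := hA m.+1 (ltac:(by rewrite addnS)).
  rewrite addnS !exprS in ha.
  apply: le_trans hs _.
  have w1 : (1 : R) <= 3 ^+ m by rewrite exprn_ege1 //; lra.
  exact: (rec_alg HL0 L0leg s0 E0 w1 ha IH').
have hfin := inv (T - t)%N 0%N (ltac:(by rewrite addn0)) (ltac:(by rewrite addn0 ltnW)).
rewrite addn0 expr0 mulr1 in hfin.
have e1 : (32 / 5 * L0 - 8 / 5 * L0) * E = 24 / 5 * L0 * E by ring.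
rewrite e1 in hfin.
have e2 : 30 * L0 ^+ 2 * e ^+ 2 * enorm x ^+ 2 = 30 * L0 ^+ 2 * E ^+ 2.
  by rewrite /E; ring.
rewrite e2; apply: le_trans (quad_final L0 s0 E0).
rewrite (@ler_pXn2r _ 2) // nnegrE ?enorm_ge0 //.
by apply: addr_ge0; rewrite mulr_ge0 // mulr_ge0 //; lra.
Qed.

End Gen.

End P3.
Import P3.

Module P4.
Set Implicit Arguments. Unset Strict Implicit. Unset Printing Implicit Defensive.

Lemma accum (R : realType) (n : nat) (A : nat -> 'M[R]_n) (d : nat -> R) (eta Lam : R) (t : nat) :
  0 < eta -> 0 <= Lam -> (forall j, 0 <= d j) ->
  (forall j, specnorm (A j.+1 - A j) <= Lam * (eta * d j.+1)) ->
  (forall j, d j.+1 <= 3 * d j) ->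
  forall m, specnorm (eta *: A (t + m)%N - eta *: A t) <= (3 ^+ m.+1 - 3) / 2 * (eta * eta * Lam * d t).
Proof.
move=> He HL d0 hA hd.
have dm : forall m, d (t + m)%N <= 3 ^+ m * d t.
  elim=> [|m IH]; first by rewrite addn0 expr0 mul1r.
  rewrite addnS; apply: le_trans (hd _) _.
  by rewrite exprS -mulrA ler_wpM2l //; lra.
elim=> [|m IH].
  by rewrite addn0 subrr spec0 expr1 subrr mul0r mul0r.
have e : eta *: A (t + m.+1)%N - eta *: A t =
   eta *: (A (t + m).+1 - A (t + m)) + (eta *: A (t + m) - eta *: A t).
  by rewrite addnS scalerBr addrA subrK.
rewrite e; apply: le_trans (specD _ _) _.
have h1 : specnorm (eta *: (A (t + m).+1 - A (t + m))) <= 3 ^+ m.+1 * (eta * eta * Lam * d t).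
  apply: le_trans (specZ _ _) _; rewrite (gtr0_norm He).
  apply: le_trans (_ : eta * (Lam * (eta * (3 ^+ m.+1 * d t))) <= _).
    apply: ler_wpM2l; first exact: ltW.
    apply: le_trans (hA _) _; apply: ler_wpM2l => //; apply: ler_wpM2l; first exact: ltW.
    by rewrite -addnS.
  by rewrite le_eqVlt; apply/orP; left; apply/eqP; ring.
have := lerD h1 IH.
move=> h2; apply: le_trans h2 _.
by rewrite le_eqVlt; apply/orP; left; apply/eqP; rewrite !exprS; field.
Qed.

End P4.
Import P4.


Theorem lemma15 (R : realType) (n : nat) (F : 'rV[R]_n -> 'rV[R]_n)
  (ell Lam eta L0 : R) (zm1 z0 : 'rV[R]_n) (T : nat) :
  monotone_op F ->
  (forall z z', enorm (F z - F z') <= ell * enorm (z - z')) ->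
  (forall z, differentiable F z) ->
  (forall z z', specnorm (Jac F z - Jac F z') <= Lam * enorm (z - z')) ->
  0 < eta ->
  (1 <= T)%N ->
  0 < L0 ->
  (forall t : nat, (t <= T)%N ->
     Num.max (eta * specnorm (At F eta zm1 z0 t))
             (eta * specnorm (Bt F eta zm1 z0 t)) <= L0) ->
  L0 <= Num.sqrt (1 / 200) ->
  eta * ell <= 2 / 3 ->
  let A := At F eta zm1 z0 in
  let C := Ct F eta zm1 z0 T in
  let M t := 1%:M - eta *: A t + C t in
  let N t := eta *: A t - C t in
  [/\ (* 1 *)
      (forall t : nat, (1 <= t <= T)%N -> specnorm (C t) <= 2 * L0 ^+ 2),
      (* 2 *)
      (forall t : nat, (1 <= t <= T)%N ->
         M t \in unitmx /\ specnorm (invmx (M t)) <= Num.sqrt 2),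
      (* 3 *)
      (forall t : nat, (1 <= t <= T)%N ->
         specnorm (N t) <= 2 * L0 /\ specnorm (M t) <= 1 + 2 * L0),
      (* 4 *)
      (forall t : nat, (t < T)%N ->
         loewner_le (invmx (M t.+1) *m N t.+1 *m (N t.+1)^T *m (invmx (M t.+1))^T)
                    (3 *: ((eta *: A t.+1) *m (eta *: A t.+1)^T
                           + C t.+1 *m (C t.+1)^T)))
    & (* 5 *)
      (forall t : nat, (t < T)%N ->
         loewner_le (C t *m (C t)^T)
           ((8 * L0 ^+ 2) *: ((eta *: A t) *m (eta *: A t)^T)
            + (30 * L0 ^+ 2 * eta ^+ 2 * (eta * Lam) ^+ 2
               * deltat F eta zm1 z0 t ^+ 2) *: 1%:M))].
Proof.
move=> Hmono Hlip Hdiff HJ Heta HT HL0 HAB HL0s Hell A C M N.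
have HL0sq : L0 ^+ 2 <= 1 / 200 := L0sq HL0 HL0s.
have HAB' : forall j, (j <= T)%N ->
    specnorm (eta *: At F eta zm1 z0 j) <= L0 /\ specnorm (eta *: Bt F eta zm1 z0 j) <= L0.
  move=> j jT; have := HAB j jT.
  move: (At F eta zm1 z0 j) (Bt F eta zm1 z0 j) => X Y.
  rewrite ge_max => /andP [h1 h2].
  by split; apply: le_trans (specZ _ _) _; rewrite gtr0_norm.
have HA : forall j, (j <= T)%N -> specnorm (eta *: At F eta zm1 z0 j) <= L0.
  by move=> j jT; case: (HAB' j jT).
have HB : forall j, (j <= T)%N -> specnorm (eta *: Bt F eta zm1 z0 j) <= L0.
  by move=> j jT; case: (HAB' j jT).
have HCT := C_T F eta zm1 z0 T.
have HCrec := fun j (jT : (j < T)%N) => C_rec F eta zm1 z0 jT.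
split.
- move=> t ht. apply: (@item1 R n (At F eta zm1 z0) (Bt F eta zm1 z0) (Ct F eta zm1 z0 T) eta L0 T) => //.
- move=> t ht. apply: (@item2 R n (At F eta zm1 z0) (Bt F eta zm1 z0) (Ct F eta zm1 z0 T) eta L0 T) => //.
- move=> t ht. apply: (@item3 R n (At F eta zm1 z0) (Bt F eta zm1 z0) (Ct F eta zm1 z0 T) eta L0 T) => //.
- move=> t ht. apply: (@item4 R n (At F eta zm1 z0) (Bt F eta zm1 z0) (Ct F eta zm1 z0 T) eta L0 T) => //.
move=> t tT.
case: (lerP 0 Lam) => HLam.
  have hdA : forall j, specnorm (At F eta zm1 z0 j.+1 - At F eta zm1 z0 j)
      <= Lam * (eta * deltat F eta zm1 z0 j.+1).
    by move=> j; apply: dA.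
  have hds : forall j, deltat F eta zm1 z0 j.+1 <= 3 * deltat F eta zm1 z0 j.
    by move=> j; apply: del_succ.
  have Hd := accum t Heta HLam (del_ge0 F eta zm1 z0) hdA hds.
  have e0 : 0 <= eta * eta * Lam * deltat F eta zm1 z0 t.
    by rewrite mulr_ge0 ?del_ge0 // !mulr_ge0 // ltW.
  have := @item5 R n (At F eta zm1 z0) (Bt F eta zm1 z0) (Ct F eta zm1 z0 T) eta L0 T.
  move=> h; have {}h := h HL0 HL0sq HA HB HCT HCrec t _ tT e0 (fun m _ => Hd m).
  have -> : 30 * L0 ^+ 2 * eta ^+ 2 * (eta * Lam) ^+ 2 * deltat F eta zm1 z0 t ^+ 2
     = 30 * L0 ^+ 2 * (eta * eta * Lam * deltat F eta zm1 z0 t) ^+ 2 by ring.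
  exact: h.
have z0v : forall x : 'cV[R]_n, x = 0.
  move=> x; have h := HJ x^T 0; rewrite subr0 in h.
  have h2 := le_trans (spec_ge0 _) h.
  rewrite nmulr_rge0 // in h2.
  have : enorm x^T = 0 by apply/eqP; rewrite eq_le h2 enorm_ge0.
  by move/enorm_eq0/eqP; rewrite -trmx0 (inj_eq trmx_inj) => /eqP.
by move=> x; rewrite (z0v x) mulmx0 mxE.
Qed.
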